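(* For all $n\ge1$, all $\beta\ge n$, and every symmetric positive semidefinite $n\times n$ matrix $M$, $$\beta+\operatorname{tr}(M-I)-\beta(\det M)^{1/\beta}\ \ge\ \frac{3}{64\beta}\Big(1-\frac n\beta\Big)^2\mathcal F\big(\|M-I\|_{\mathrm{HS}}\big),$$ where $\mathcal F(t)=t-\log(1+t)$ and $\|\cdot\|_{\mathrm{HS}}$ is the Hilbert–Schmidt norm.
   Context: The left-hand side is $\mathcal G_\kappa(M)=\frac1\kappa(\det M)^{-\kappa}-\frac1\kappa+\operatorname{tr}(M-I)$ with $\kappa=-1/\beta$. *)

(* Defs.v *)
From Stdlib Require Import Reals.
From mathcomp Require Import all_boot all_fingroup matrix.
Set Implicit Arguments. Unset Strict Implicit. Unset Printing Implicit Defensive.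

Local Open Scope R_scope.

Definition Rsum (T : finType) (F : T -> R) : R := \big[Rplus/0]_(i : T) F i.
Definition Rprod (T : finType) (F : T -> R) : R := \big[Rmult/1]_(i : T) F i.

Definition idR (n : nat) : 'M[R]_n := \matrix_(i, j) (if i == j then 1 else 0).
Definition msub (n : nat) (A B : 'M[R]_n) : 'M[R]_n := \matrix_(i, j) (A i j - B i j).

Definition trR (n : nat) (A : 'M[R]_n) : R := Rsum (fun i => A i i).
Definition detR (n : nat) (A : 'M[R]_n) : R :=
  Rsum (fun s : 'S_n => (if odd_perm s then -1 else 1) * Rprod (fun i => A i (s i))).
Definition hsnorm (n : nat) (A : 'M[R]_n) : R :=
  sqrt (Rsum (fun i => Rsum (fun j => (A i j) ^ 2))).

Definition symmetricR (n : nat) (A : 'M[R]_n) : Prop := forall i j, A i j = A j i.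
Definition psdR (n : nat) (A : 'M[R]_n) : Prop :=
  forall x : 'I_n -> R, 0 <= Rsum (fun i => Rsum (fun j => x i * A i j * x j)).

Definition rpow (x y : R) : R := if Rle_dec x 0 then 0 else Rpower x y.

Definition Fcal (t : R) : R := t - ln (1 + t).

(* Main.v *)
Require Import Defs.
From Stdlib Require Import Reals Lra Psatz Classical.
From mathcomp Require Import all_boot all_fingroup matrix.
From mathcomp Require Import all_algebra.
From mathcomp Require ring.
From Coquelicot Require Import Coquelicot.
From mathcomp Require Import Rstruct complex.
Set Implicit Arguments. Unset Strict Implicit. Unset Printing Implicit Defensive.
Module MC.
Import ring.
Import GRing.Theory Num.Theory.
Local Open Scope ring_scope.
Local Open Scope sesquilinear_scope.
Section Gen.
Variable C : numClosedFieldType.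

Lemma key_i (x y z w v : C) :
  (x + 'i * y) * z * (w - 'i * v) = z * (x * w + y * v) + 'i * (z * (y * w - x * v)).
Proof.
have -> : (x + 'i * y) * z * (w - 'i * v) =
   z * (x * w + y * v) + 'i * (z * (y * w - x * v)) - ('i ^+ 2 + 1) * (z * y * v) by ring.
by rewrite sqrCi addNr mul0r subr0.
Qed.

Lemma gen n (A : 'M[C]_n) :
  (forall i j, A i j \is Num.real) -> (forall i j, A i j = A j i) ->
  (forall x : 'I_n -> C, (forall i, x i \is Num.real) ->
      0 <= \sum_i \sum_j x i * A i j * x j) ->
  exists d : 'I_n -> C, [/\ forall i, 0 <= d i, \tr A = \sum_i d i,
     \det A = \prod_i d i &
     \sum_i \sum_j (A i j - (i == j)%:R) ^+ 2 = \sum_i (d i - 1) ^+ 2].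
Proof.
move=> Areal Asym Apsd.
have AtC : A ^t* = A.
  by apply/matrixP => i j; rewrite !mxE Asym; apply/CrealP.
have normal : A \is normalmx by rewrite qualifE /= AtC.
have /orthomx_spectralP eA := normal.
set P := spectralmx A in eA; set D := spectral_diag A in eA.
have Pu : P \in unitmx by apply: spectral_unit.
have Puni : P \is unitarymx by apply: spectral_unitarymx.
exists (fun i => D 0 i).
clearbody P D.
have PPi : P *m invmx P = 1%:M by apply: mulmxV.
have PiP : invmx P *m P = 1%:M by apply: mulVmx.
have PK (X : 'M[C]_n) : X *m P *m invmx P = X by rewrite -mulmxA PPi mulmx1.
have trC (X Y : 'M[C]_n) : \tr (X *m Y) = \tr (Y *m X) := mxtrace_mulC X Y.
have eD : diag_mx D = P *m A *m invmx P.
  by rewrite eA !mulmxA mulmxV // mul1mx -mulmxA mulmxV // mulmx1.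
split.
- move=> i.
  have eIP : invmx P = P ^t* by apply: invmx_unitary.
  have -> : D 0 i = (P *m A *m invmx P) i i by rewrite -eD mxE eqxx mulr1n.
  set a := fun j => 'Re (P i j); set b := fun j => 'Im (P i j).
  have eP j : P i j = a j + 'i * b j by apply: Crect.
  have eQ k : (P ^t*) k i = a k - 'i * b k.
    by rewrite !mxE eP conjC_rect // ?Creal_Re ?Creal_Im.
  rewrite eIP mxE.
  under eq_bigr => k _ do rewrite eQ mxE mulr_suml.
  under eq_bigr => k _ do under eq_bigr => j _ do rewrite eP key_i.
  under eq_bigr => k _ do rewrite big_split -mulr_sumr.
  rewrite big_split -mulr_sumr /=.
  have -> : \sum_k \sum_j A j k * (b j * a k - a j * b k) = 0.
    under eq_bigr => k _ do under eq_bigr => j _ do rewrite mulrBr.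
    under eq_bigr => k _ do rewrite sumrB.
    rewrite sumrB; apply/eqP; rewrite subr_eq0; apply/eqP.
    rewrite exchange_big /=; apply: eq_bigr => x _; apply: eq_bigr => y _.
    rewrite Asym; ring.
  rewrite mulr0 addr0.
  have -> : \sum_k \sum_j A j k * (a j * a k + b j * b k) =
      \sum_j \sum_k a j * A j k * a k + \sum_j \sum_k b j * A j k * b k.
    rewrite exchange_big -big_split /=; apply: eq_bigr => j _.
    rewrite -big_split; apply: eq_bigr => k _ /=; ring.
  by apply: addr_ge0; apply: Apsd => j; rewrite ?Creal_Re ?Creal_Im.
- rewrite eA trC mulmxA.
  transitivity (\tr (1%:M *m diag_mx D)); first by congr (\tr (_ *m _)).
  by rewrite mul1mx mxtrace_diag.
- rewrite eA !det_mulmx det_inv det_diag mulrC mulrA.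
  by rewrite mulrV ?mul1r // -unitmxE.
- pose D' := \row_i (D 0 i - 1).
  have eE : diag_mx D' = diag_mx D - 1%:M.
    apply/matrixP => i j; rewrite !mxE; case: eqP => [->|_].
    + by rewrite !mulr1n.
    + by rewrite !mulr0n subr0.
  have eB : A - 1%:M = invmx P *m diag_mx D' *m P.
    by rewrite eE mulmxBr mulmxBl eA mulmx1 PiP.
  have trBB : \tr ((A - 1%:M) *m (A - 1%:M)) = \sum_i (D 0 i - 1) ^+ 2.
    rewrite eB -!mulmxA [P *m _]mulmxA PPi mul1mx.
    rewrite trC -mulmxA PK mulmx_diag mxtrace_diag.
    by apply: eq_bigr => i _; rewrite !mxE expr2.
  rewrite -trBB /mxtrace; apply: eq_bigr => i _.
  rewrite mxE; apply: eq_bigr => j _.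
  by rewrite !mxE expr2 Asym eq_sym.
Qed.
End Gen.

Lemma transfer n (M : 'M[R]_n) : symmetricR M -> psdR M ->
  exists e : 'I_n -> R, [/\ forall i, 0 <= e i, \tr M = \sum_i e i,
     \det M = \prod_i e i &
     \sum_i \sum_j (M i j - (i == j)%:R) ^+ 2 = \sum_i (e i - 1) ^+ 2].
Proof.
move=> Msym Mpsd.
pose A : 'M[R[i]]_n := map_mx (real_complex R) M.
have h1 : forall i j, A i j \is Num.real.
  by move=> i j; rewrite mxE; apply/complex_realP; exists (M i j).
have h2 : forall i j, A i j = A j i by move=> i j; rewrite !mxE Msym.
have h3 : forall x : 'I_n -> R[i], (forall i, x i \is Num.real) ->
      0 <= \sum_i \sum_j x i * A i j * x j.
  move=> x xr.
  have ex i : x i = (complex.Re (x i))%:C%C by rewrite RRe_real.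
  have -> : \sum_i \sum_j x i * A i j * x j =
      (\sum_i \sum_j complex.Re (x i) * M i j * complex.Re (x j))%:C%C.
    rewrite rmorph_sum; apply: eq_bigr => i _; rewrite rmorph_sum.
    by apply: eq_bigr => j _; rewrite !rmorphM /= -!ex mxE.
  rewrite ler0c; apply/RleP; exact: (Mpsd (fun i => complex.Re (x i))).
have [d [d0 dtr ddet dhs]] := gen h1 h2 h3.
have dr i : d i = (complex.Re (d i))%:C%C by rewrite RRe_real // ger0_real.
exists (fun i => complex.Re (d i)); split.
- by move=> i; rewrite -ler0c -dr.
- apply: complexI; rewrite [RHS]rmorph_sum /=.
  under [RHS]eq_bigr => i _ do rewrite -dr.
  rewrite -dtr /mxtrace rmorph_sum; apply: eq_bigr => i _; by rewrite mxE.
- apply: complexI; rewrite [RHS]rmorph_prod /=.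
  under [RHS]eq_bigr => i _ do rewrite -dr.
  by rewrite -ddet det_map_mx.
- apply: complexI; rewrite [RHS]rmorph_sum /=.
  under [RHS]eq_bigr => i _ do rewrite rmorphXn rmorphB /= rmorph1 -dr.
  rewrite -dhs rmorph_sum; apply: eq_bigr => i _; rewrite rmorph_sum.
  by apply: eq_bigr => j _; rewrite rmorphXn rmorphB rmorph_nat mxE.
Qed.

Lemma pow2E (x : R) : pow x 2 = x ^+ 2.
Proof. by rewrite /= Rmult_1_r expr2. Qed.

Lemma spectral_facts n (M : 'M[R]_n) : symmetricR M -> psdR M ->
  exists e : 'I_n -> R,
  (forall i, Rle 0 (e i)) /\ trR (msub M (idR n)) = Rsum (fun i => Rminus (e i) 1) /\
  detR M = Rprod e /\
  hsnorm (msub M (idR n)) = sqrt (Rsum (fun i => pow (Rminus (e i) 1) 2)).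
Proof.
move=> Msym Mpsd; have [e [e0 etr edet ehs]] := transfer Msym Mpsd.
exists e; split; [|split; [|split]].
- by move=> i; apply/RleP.
- rewrite /trR /Rsum; under eq_bigr => i _ do rewrite !mxE eqxx.
  have -> : \big[Rplus/0]_(i < n) Rminus (e i) 1 = \sum_(i < n) (e i - 1) by [].
  rewrite !sumrB -etr; congr (_ - _).
- rewrite /detR /Rsum /Rprod -edet /determinant.
  apply: eq_bigr => s _; by case: (odd_perm s); rewrite ?expr1 ?expr0.
- rewrite /hsnorm; congr sqrt.
  rewrite /Rsum.
  have -> : \big[Rplus/0]_(i < n) pow (Rminus (e i) 1) 2 = \sum_(i < n) (e i - 1) ^+ 2.
    by apply: eq_bigr => i _; rewrite pow2E.
  rewrite -ehs; apply: eq_bigr => i _; apply: eq_bigr => j _.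
  rewrite pow2E !mxE; by case: (i == j).
Qed.
End MC.

Module AN.
Local Unset Implicit Arguments.
Open Scope R_scope.

Lemma mono_le (f df : R -> R) a b : a <= b ->
  (forall x, a <= x <= b -> is_derive f x (df x)) ->
  (forall x, a <= x <= b -> 0 <= df x) -> f a <= f b.
Proof.
intros hab hd hpos.
destruct (Req_dec a b) as [->|hne]; [lra|].
destruct (MVT_gen f a b df) as [c [hc eq]].
- intros x hx. rewrite (Rmin_left a b ltac:(lra)) (Rmax_right a b ltac:(lra)) in hx.
  apply hd; lra.
- intros x hx. rewrite (Rmin_left a b ltac:(lra)) (Rmax_right a b ltac:(lra)) in hx.
  apply continuity_pt_filterlim. apply (@ex_derive_continuous R_AbsRing R_NormedModule).
  exists (df x); apply hd; lra.
- rewrite (Rmin_left a b ltac:(lra)) (Rmax_right a b ltac:(lra)) in hc.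
  assert (0 <= df c) by (apply hpos; lra).
  assert (0 <= df c * (b - a)) by (apply Rmult_le_pos; lra).
  lra.
Qed.

Lemma D1 a x : 0 < x ->
  is_derive (fun x => exp (a * ln x)) x (a * exp ((a - 1) * ln x)).
Proof.
intros hx. auto_derive.
- exact hx.
- replace ((a - 1) * ln x) with (a * ln x + - ln x) by ring.
  rewrite exp_plus exp_Ropp (exp_ln x hx). field. lra.
Qed.

Lemma exp_le' x y : x <= y -> exp x <= exp y.
Proof. intros h; destruct (Req_dec x y) as [->|hn]; [lra|]. left; apply exp_increasing; lra. Qed.

Lemma ln_le' x y : 0 < x -> x <= y -> ln x <= ln y.
Proof.
intros hx hxy. destruct (Rle_lt_dec (ln x) (ln y)) as [h|h]; [exact h|].
apply exp_increasing in h. rewrite (exp_ln x hx) (exp_ln y ltac:(lra)) in h. lra.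
Qed.

Lemma ln2_pos : 0 < ln 2.
Proof.
destruct (Rle_lt_dec (ln 2) 0) as [h|h]; [|exact h].
apply exp_le' in h. rewrite (exp_ln 2 ltac:(lra)) exp_0 in h. lra.
Qed.

Section Scal.
Variable p : R.
Hypothesis hp : 0 < p <= 1.
Let k := p * (1 - p) / 8.
Let f x := 1 - p + p * x - exp (p * ln x) - k * (x - 1) ^ 2.
Let g x := p - p * exp ((p - 1) * ln x) - 2 * k * (x - 1).
Let h x := p * (1 - p) * exp ((p - 2) * ln x) - 2 * k.

Lemma f_der x : 0 < x -> is_derive f x (g x).
Proof.
intros hx. unfold f, g. auto_derive.
- exact hx.
- replace ((p - 1) * ln x) with (p * ln x + - ln x) by ring.
  rewrite exp_plus exp_Ropp (exp_ln x hx). field. lra.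
Qed.

Lemma g_der x : 0 < x -> is_derive g x (h x).
Proof.
intros hx. unfold g, h. auto_derive.
- exact hx.
- replace ((p - 2) * ln x) with ((p - 1) * ln x + - ln x) by ring.
  rewrite exp_plus exp_Ropp (exp_ln x hx). field. lra.
Qed.

Lemma h_nonneg x : 0 < x <= 2 -> 0 <= h x.
Proof.
intros hx. unfold h, k.
assert (hl : ln x <= ln 2) by (apply ln_le'; lra).
assert (l2 := ln2_pos).
assert (he : exp (-2 * ln 2) <= exp ((p - 2) * ln x)).
{ apply exp_le'. nra. }
replace (exp (-2 * ln 2)) with (/ 4) in he.
2:{ replace (-2 * ln 2) with (- (ln 2 + ln 2)) by ring.
    rewrite exp_Ropp exp_plus (exp_ln 2 ltac:(lra)). field. }
assert (0 <= p * (1 - p)) by nra. nra.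
Qed.

Lemma g1 : g 1 = 0.
Proof. unfold g. rewrite ln_1 Rmult_0_r exp_0. ring. Qed.
Lemma f1 : f 1 = 0.
Proof. unfold f. rewrite ln_1 Rmult_0_r exp_0. ring. Qed.

Lemma g_le x : 0 < x <= 1 -> g x <= 0.
Proof.
intros hx. rewrite <- g1. apply (mono_le g h); [lra| |].
- intros y hy; apply g_der; lra.
- intros y hy; apply h_nonneg; lra.
Qed.

Lemma g_ge x : 1 <= x <= 2 -> 0 <= g x.
Proof.
intros hx. rewrite <- g1. apply (mono_le g h); [lra| |].
- intros y hy; apply g_der; lra.
- intros y hy; apply h_nonneg; lra.
Qed.

Lemma f_ge x : 0 < x <= 2 -> 0 <= f x.
Proof.
intros hx. rewrite <- f1. destruct (Rle_lt_dec x 1) as [h1|h1].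
- assert (- f x <= - f 1). 2:{ apply Ropp_le_cancel; exact H. }
  apply (mono_le (fun y => - f y) (fun y => - g y) x 1); [lra| |].
  + intros y hy. apply (@is_derive_opp R_AbsRing R_NormedModule). apply f_der; lra.
  + intros y hy. assert (g y <= 0) by (apply g_le; lra). lra.
- apply (mono_le f g); [lra| |].
  + intros y hy; apply f_der; lra.
  + intros y hy; apply g_ge; lra.
Qed.

Lemma big_x x : 2 <= x -> k * (x - 1) <= 1 - p + p * x - exp (p * ln x).
Proof.
intros hx.
set (m := fun y => 1 - p + p * y - exp (p * ln y) - k * (y - 1)).
set (dm := fun y => p - p * exp ((p - 1) * ln y) - k).
assert (m2 : 0 <= m 2).
{ assert (H := f_ge 2 ltac:(lra)). unfold f in H. unfold m. nra. }
assert (g2 := g_ge 2 ltac:(lra)). unfold g in g2.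
assert (H : m 2 <= m x).
{ apply (mono_le m dm); [lra| |].
  - intros y hy. unfold m, dm. auto_derive.
    + lra.
    + replace ((p - 1) * ln y) with (p * ln y + - ln y) by ring.
      rewrite exp_plus exp_Ropp (exp_ln y ltac:(lra)). field. lra.
  - intros y hy. unfold dm.
    assert (ln 2 <= ln y) by (apply ln_le'; lra).
    assert (exp ((p - 1) * ln y) <= exp ((p - 1) * ln 2)) by (apply exp_le'; nra).
    assert (0 <= k) by (unfold k; nra).
    nra. }
unfold m in H, m2. lra.
Qed.
End Scal.


Lemma phi_bound p x : 0 < p <= 1 -> 0 <= x ->
  p * (1 - p) / 8 * Rmin ((x - 1) ^ 2) (Rabs (x - 1)) <= 1 - p + p * x - rpow x p.
Proof.
intros hp hx. assert (hk : 0 <= p * (1 - p) / 8) by nra.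
unfold rpow. destruct (Rle_dec x 0) as [h0|h0].
- assert (x = 0) by lra. subst x.
  replace (Rabs (0 - 1)) with 1 by (rewrite (Rabs_left (0-1) ltac:(lra)); ring).
  replace ((0 - 1) ^ 2) with 1 by ring. rewrite (Rmin_left 1 1 ltac:(lra)). simpl. nra.
- cbn [is_left]. unfold Rpower. destruct (Rle_lt_dec x 2) as [h2|h2].
  + assert (H := f_ge p hp x ltac:(lra)). simpl in H.
    assert (Rmin ((x - 1) ^ 2) (Rabs (x - 1)) <= (x - 1) ^ 2) by apply Rmin_l.
    assert (hk2 : p * (1 - p) / 8 * Rmin ((x - 1) ^ 2) (Rabs (x - 1)) <= p * (1 - p) / 8 * (x - 1) ^ 2) by (apply Rmult_le_compat_l; lra).
    lra.
  + assert (H := big_x p hp x ltac:(lra)). simpl in H.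
    rewrite (Rabs_right (x - 1) ltac:(lra)).
    assert (Rmin ((x - 1) ^ 2) (x - 1) <= x - 1) by apply Rmin_r.
    assert (hk2 : p * (1 - p) / 8 * Rmin ((x - 1) ^ 2) (x - 1) <= p * (1 - p) / 8 * (x - 1)) by (apply Rmult_le_compat_l; lra).
    lra.
Qed.

Lemma Rsum_le n (F G : 'I_n -> R) : (forall i, F i <= G i) -> Rsum F <= Rsum G.
Proof.
intros h. unfold Rsum. apply: (big_ind2 (fun x y => x <= y)).
- lra.
- intros; lra.
- intros i _; apply h.
Qed.

Lemma Rsum_plus n (F G : 'I_n -> R) : Rsum (fun i => F i + G i) = Rsum F + Rsum G.
Proof. unfold Rsum. by rewrite big_split. Qed.

Lemma Rsum_scal n c (F : 'I_n -> R) : Rsum (fun i => c * F i) = c * Rsum F.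
Proof. unfold Rsum. by rewrite big_distrr. Qed.

Lemma Rsum_const n c : Rsum (fun _ : 'I_n => c) = INR n * c.
Proof.
unfold Rsum. rewrite big_const_ord. induction n as [|n IH]; simpl.
- ring.
- rewrite IH. destruct n; simpl; ring.
Qed.

Lemma Rsum_ge0 n (F : 'I_n -> R) : (forall i, 0 <= F i) -> 0 <= Rsum F.
Proof.
intros h. assert (H := Rsum_le n (fun _ => 0) F h).
rewrite Rsum_const in H. lra.
Qed.

Lemma Rsum_term n (F : 'I_n -> R) i : (forall j, 0 <= F j) -> F i <= Rsum F.
Proof.
intros h. unfold Rsum. rewrite (bigD1 i) //=.
match goal with |- _ <= _ + ?b => assert (H : 0 <= b); [|revert H; generalize b] end.
{ apply: (big_ind (fun x => 0 <= x)); [lra | intros; lra | intros; apply h]. }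
intros r Hr. lra.
Qed.

Lemma Rprod_exp n (F : 'I_n -> R) : (forall i, 0 < F i) ->
  Rprod F = exp (Rsum (fun i => ln (F i))).
Proof.
intros h. unfold Rprod, Rsum.
apply: (big_ind2 (fun x y => x = exp y)).
- by rewrite exp_0.
- intros a1 a2 b1 b2 -> ->. by rewrite exp_plus.
- intros i _. by rewrite (exp_ln _ (h i)).
Qed.

Lemma Rprod_zero n (F : 'I_n -> R) i : F i = 0 -> Rprod F = 0.
Proof. intros h. unfold Rprod. rewrite (bigD1 i) //= h; apply Rmult_0_l. Qed.

Lemma rpow_ge0 x y : 0 <= rpow x y.
Proof. unfold rpow. destruct (Rle_dec x 0); cbn [is_left]; [lra|]. unfold Rpower. left; apply exp_pos. Qed.

Lemma amgm n (e : 'I_n -> R) beta : (1 <= n)%nat -> INR n <= beta ->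
  (forall i, 0 <= e i) ->
  rpow (Rprod e) (1 / beta) <= / INR n * Rsum (fun i => rpow (e i) (INR n / beta)).
Proof.
intros hn hb he.
assert (hn' : 1 <= INR n) by (apply (le_INR 1); apply/leP; exact hn).
set (p := INR n / beta).
assert (hr : 0 <= Rsum (fun i => rpow (e i) p)) by (apply Rsum_ge0; intros; apply rpow_ge0).
destruct (classic (exists i, e i = 0)) as [[i hi]|hall].
- rewrite (Rprod_zero n e i hi).
  replace (rpow 0 (1 / beta)) with 0.
  2:{ unfold rpow. destruct (Rle_dec 0 0) as [h00|c]; cbn [is_left]; lra. }
  assert (0 < / INR n) by (apply Rinv_0_lt_compat; lra).
  fold p. nra.
- assert (hpos : forall i, 0 < e i).
  { intros i. destruct (he i) as [h|h]; [exact h|]. exfalso; apply hall; exists i; auto. }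
  rewrite (Rprod_exp n e hpos).
  set (S := Rsum (fun i => ln (e i))).
  set (y := fun i => exp (p * ln (e i))).
  assert (ey : forall i, rpow (e i) p = y i).
  { intros i. unfold rpow. destruct (Rle_dec (e i) 0) as [c|c]; cbn [is_left]; [specialize (hpos i); lra|]. reflexivity. }
  assert (eyS : Rsum (fun i => rpow (e i) p) = Rsum y).
  { unfold Rsum. apply: eq_bigr => i _. apply ey. }
  rewrite eyS.
  set (A := / INR n * Rsum y).
  assert (hy : forall i, 0 < y i) by (intros; apply exp_pos).
  assert (hA : 0 < A).
  { unfold A. assert (y (Ordinal hn) <= Rsum y) by (apply Rsum_term; intros; left; apply hy).
    assert (0 < / INR n) by (apply Rinv_0_lt_compat; lra).
    specialize (hy (Ordinal hn)). nra. }
  assert (key : forall i, p * ln (e i) <= ln A + y i / A - 1).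
  { intros i. assert (H := exp_ineq1_le (ln (y i / A))).
    rewrite exp_ln in H. 2:{ apply Rdiv_lt_0_compat; auto. }
    rewrite ln_div in H; auto. unfold y in H at 1. rewrite ln_exp in H. lra. }
  assert (hsum := Rsum_le n (fun i => p * ln (e i)) (fun i => (ln A - 1) + / A * y i)
     ltac:(intros i; specialize (key i); unfold Rdiv in key; lra)).
  rewrite Rsum_scal Rsum_plus Rsum_const Rsum_scal in hsum.
  fold S in hsum.
  assert (eA : / A * Rsum y = INR n).
  { unfold A. field. split; [lra|]. intro hz. unfold A in hA. rewrite hz in hA. lra. }
  rewrite eA in hsum.
  assert (hb0 : 0 < beta) by lra.
  assert (hS : S * (1 / beta) <= ln A).
  { unfold p in hsum. 
    assert (INR n * (S * (1 / beta)) <= INR n * ln A).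
    { replace (INR n * (S * (1 / beta))) with (INR n / beta * S) by (field; lra). lra. }
    nra. }
  unfold rpow. destruct (Rle_dec (exp S) 0) as [c|c]; cbn [is_left]; [assert (H0 := exp_pos S); lra|].
  unfold Rpower. rewrite ln_exp. fold A.
  rewrite <- (exp_ln A hA). apply exp_le'. lra.
Qed.

Lemma F_bound n (s : 'I_n -> R) :
  Fcal (sqrt (Rsum (fun i => s i ^ 2))) <= 2 * Rsum (fun i => Rmin (s i ^ 2) (Rabs (s i))).
Proof.
set (u := fun i => Rmin (s i ^ 2) (Rabs (s i))).
assert (hu : forall i, 0 <= u i /\ s i ^ 2 <= u i + u i ^ 2).
{ intros i. unfold u. assert (e2 : s i ^ 2 = Rabs (s i) ^ 2) by (rewrite <- pow2_abs; reflexivity).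
  assert (ha := Rabs_pos (s i)).
  unfold Rmin. destruct (Rle_dec (s i ^ 2) (Rabs (s i))) as [c|c]; rewrite e2; rewrite e2 in c; nra. }
set (U := Rsum u).
assert (hU : 0 <= U) by (apply Rsum_ge0; intros i; apply hu).
assert (hsq : Rsum (fun i => u i ^ 2) <= U * U).
{ unfold U at 2. rewrite <- Rsum_scal. apply Rsum_le. intros i.
  assert (u i <= U) by (apply Rsum_term; intros; apply hu).
  assert (0 <= u i) by apply hu. simpl. nra. }
set (T := Rsum (fun i => s i ^ 2)).
assert (hT : T <= U + U * U).
{ unfold T. eapply Rle_trans. apply (Rsum_le n _ (fun i => u i + u i ^ 2)); intros; apply hu.
  rewrite Rsum_plus. fold U. lra. }
assert (hT0 : 0 <= T) by (apply Rsum_ge0; intros; apply pow2_ge_0).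
set (t := sqrt T).
assert (ht0 : 0 <= t) by apply sqrt_pos.
assert (ht2 : t * t = T) by (apply sqrt_sqrt; exact hT0).
assert (hln : t / (1 + t) <= ln (1 + t)).
{ assert (H := exp_ineq1_le (- ln (1 + t))).
  rewrite exp_Ropp (exp_ln (1 + t) ltac:(lra)) in H.
  replace (t / (1 + t)) with (1 - / (1 + t)) by (field; lra). lra. }
assert (hq : t - t * t <= t / (1 + t)).
{ replace (t / (1 + t)) with (t - t * t + t * t * t / (1 + t)) by (field; lra).
  assert (0 <= t * t * t / (1 + t)).
  { apply Rdiv_le_0_compat; [|lra]. repeat apply Rmult_le_pos; lra. }
  lra. }
assert (hpos : 0 <= t / (1 + t)) by (apply Rdiv_le_0_compat; lra).
unfold Fcal. fold T. fold t. change (Rsum (fun i => Rmin (s i ^ 2) (Rabs (s i)))) with U.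
destruct (Rle_dec U 1) as [c|c].
- nra.
- assert (t <= 2 * U).
  { destruct (Rle_dec t (2 * U)) as [d|d]; [exact d|]. nra. }
  lra.
Qed.
Lemma final_scalar n (e : 'I_n -> R) beta : (1 <= n)%nat -> INR n <= beta ->
  (forall i, 0 <= e i) ->
  beta + Rsum (fun i => Rminus (e i) 1) - beta * rpow (Rprod e) (1 / beta)
   >= 3 / (64 * beta) * (1 - INR n / beta) ^ 2 *
      Fcal (sqrt (Rsum (fun i => pow (Rminus (e i) 1) 2))).
Proof.
intros hn hb he.
assert (hn' : 1 <= INR n) by (apply (le_INR 1); apply/leP; exact hn).
assert (hb0 : 0 < beta) by lra.
set (p := INR n / beta).
assert (hp : 0 < p <= 1).
{ unfold p. split; [apply Rdiv_lt_0_compat; lra|].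
  apply (Rmult_le_reg_r beta); [lra|]. unfold Rdiv. rewrite Rmult_assoc Rinv_l; lra. }
set (k := p * (1 - p) / 8).
set (rp := rpow (Rprod e) (1 / beta)).
set (Rs := Rsum (fun i => rpow (e i) p)).
set (E := Rsum e).
set (U := Rsum (fun i => Rmin ((e i - 1) ^ 2) (Rabs (e i - 1)))).
set (F := Fcal (sqrt (Rsum (fun i => pow (Rminus (e i) 1) 2)))).
assert (hA : rp <= / INR n * Rs) by (apply amgm; auto).
assert (hB : k * U <= INR n * (1 - p) + p * E - Rs).
{ unfold U. rewrite <- Rsum_scal.
  replace (INR n * (1 - p) + p * E - Rs) with
     (Rsum (fun i => (1 - p + p * e i) + (-1) * rpow (e i) p)).
  2:{ rewrite Rsum_plus Rsum_plus Rsum_const Rsum_scal Rsum_scal. fold E Rs. ring. }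
  apply Rsum_le. intros i. assert (H := phi_bound p (e i) hp (he i)). fold k in H. lra. }
assert (hF : F <= 2 * U) by (apply (F_bound n (fun i => e i - 1))).
assert (hU : 0 <= U).
{ apply Rsum_ge0. intros i. unfold Rmin. destruct (Rle_dec _ _); cbn [is_left].
  apply pow2_ge_0. apply Rabs_pos. }
assert (eS : Rsum (fun i => Rminus (e i) 1) = E + INR n * (-1)).
{ rewrite <- Rsum_const. unfold E. rewrite <- Rsum_plus. reflexivity. }
rewrite eS. fold rp. fold F.
set (c := 3 / (64 * beta) * (1 - p) ^ 2).
assert (hc : 0 <= c).
{ unfold c. apply Rmult_le_pos; [|apply pow2_ge_0]. apply Rdiv_le_0_compat; lra. }
assert (A1 : beta * rp <= beta / INR n * Rs).
{ replace (beta / INR n * Rs) with (beta * (/ INR n * Rs)) by (field; lra).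
  apply Rmult_le_compat_l; lra. }
assert (B1 : beta / INR n * (k * U) <= beta / INR n * (INR n * (1 - p) + p * E - Rs)).
{ apply Rmult_le_compat_l; [|exact hB]. apply Rdiv_le_0_compat; lra. }
assert (E1 : beta / INR n * (INR n * (1 - p) + p * E - Rs) = beta - INR n + E - beta / INR n * Rs).
{ unfold p. field. lra. }
assert (E2 : beta / INR n * (k * U) = (1 - p) / 8 * U).
{ unfold k, p. field. lra. }
assert (C1 : c * F <= c * (2 * U)) by (apply Rmult_le_compat_l; lra).
assert (C2 : c * (2 * U) <= (1 - p) / 8 * U).
{
  assert (H : c * 2 <= (1 - p) / 8).
  { unfold c.
    assert (Eq : (1 - p) / 8 - 3 / (64 * beta) * (1 - p) ^ 2 * 2 =
       (1 - p) * (8 * beta - 6 * (1 - p)) / (64 * beta)) by (field; lra).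
    assert (0 <= (1 - p) * (8 * beta - 6 * (1 - p)) / (64 * beta)).
    { apply Rdiv_le_0_compat; [|lra]. apply Rmult_le_pos; lra. }
    lra. }
  replace (c * (2 * U)) with (c * 2 * U) by ring.
  apply Rmult_le_compat_r; lra. }
lra.
Qed.
End AN.

Open Scope R_scope.

Theorem lemma3 (n : nat) (beta : R) (M : 'M[R]_n) :
  (1 <= n)%nat ->
  INR n <= beta ->
  symmetricR M -> psdR M ->
  beta + trR (msub M (idR n)) - beta * rpow (detR M) (1 / beta)
   >= 3 / (64 * beta) * (1 - INR n / beta) ^ 2 * Fcal (hsnorm (msub M (idR n))).
Proof.
intros hn hb hs hp.
destruct (MC.spectral_facts hs hp) as [e [he [htr [hdet hhs]]]].
rewrite htr hdet hhs. apply AN.final_scalar; auto.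
Qed.
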